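(* For every integer $n\ge5$, $3b(n)-\tfrac32\le \tilde m_{\mathrm{opt}}(n)<3b(n)+\tfrac12$; equivalently, $\tilde m_{\mathrm{opt}}(n)$ equals $\lceil 3b(n)-\frac32\rceil$ or $\lceil 3b(n)-\frac32\rceil+1$.
   Context: Let $b(n)=(1+\frac1n)\log_2(n+1)-1$. For $1\le m\le n$ put $E_m[\ell]=\sum_{j=0}^{m-1}\frac{n}{n-j}$ and $\tilde F(m)=\dfrac{2m\,b(n)+\frac12\sum_{j=1}^{m-1}\frac{j(j+1)}{n-j}}{E_m[\ell]}$. Let $\tilde m_{\mathrm{opt}}(n)$ be the smallest $m\in\{1,\dots,n\}$ minimizing $\tilde F(m)$. *)

(* Defs.v *)
From Stdlib Require Import Reals Lra Lia List.
Import ListNotations.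
Open Scope R_scope.

Definition log2 (x : R) : R := ln x / ln 2.

Definition b (n : nat) : R := (1 + / INR n) * log2 (INR n + 1) - 1.

Definition E (n m : nat) : R :=
  fold_right Rplus 0 (map (fun j => INR n / (INR n - INR j)) (seq 0 m)).

Definition Ssum (n m : nat) : R :=
  fold_right Rplus 0
    (map (fun j => INR j * (INR j + 1) / (INR n - INR j)) (seq 1 (m - 1))).

Definition Ftilde (n m : nat) : R :=
  (2 * INR m * b n + / 2 * Ssum n m) / E n m.

Definition is_mopt (n m : nat) : Prop :=
  (1 <= m <= n)%nat /\
  (forall k, (1 <= k <= n)%nat -> Ftilde n m <= Ftilde n k) /\
  (forall k, (1 <= k < m)%nat -> Ftilde n m < Ftilde n k).

(* Main.v *)
Require Import Defs.
From Stdlib Require Import Reals Lra Lia ZArith List Bool.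
Open Scope R_scope.

Definition sumR (f : nat -> R) (l : list nat) : R := fold_right Rplus 0 (map f l).

Lemma sumR_app f l1 l2 : sumR f (l1 ++ l2) = sumR f l1 + sumR f l2.
Proof. unfold sumR; induction l1 as [|a l IH]; simpl; [lra| rewrite IH; lra]. Qed.

Lemma sumR_S f m : sumR f (seq 0 (S m)) = sumR f (seq 0 m) + f m.
Proof. rewrite seq_S, sumR_app. simpl. unfold sumR at 2. simpl. lra. Qed.

Lemma sumR_plus f g l : sumR (fun x => f x + g x) l = sumR f l + sumR g l.
Proof. unfold sumR; induction l as [|a l IH]; simpl; [lra| rewrite IH; lra]. Qed.

Lemma sumR_scal c f l : sumR (fun x => c * f x) l = c * sumR f l.
Proof. unfold sumR; induction l as [|a l IH]; simpl; [lra| rewrite IH; lra]. Qed.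

Lemma sumR_le f g l : (forall x, In x l -> f x <= g x) -> sumR f l <= sumR g l.
Proof. unfold sumR; induction l as [|a l IH]; simpl; intros H; [lra|].
  specialize (IH (fun x Hx => H x (or_intror Hx))). specialize (H a (or_introl eq_refl)). lra. Qed.

Lemma sumR_ext f g l : (forall x, In x l -> f x = g x) -> sumR f l = sumR g l.
Proof. intros H; apply Rle_antisym; apply sumR_le; intros x Hx; rewrite (H x Hx); lra. Qed.

Lemma sumR_pos f m : (1 <= m)%nat -> (forall j, (j < m)%nat -> 0 < f j) -> 0 < sumR f (seq 0 m).
Proof. intros Hm H. destruct m as [|m]; [lia|]. rewrite sumR_S.
  assert (0 <= sumR f (seq 0 m)).
  { replace 0 with (sumR (fun _ => 0) (seq 0 m)).
    - apply sumR_le. intros x Hx. apply in_seq in Hx. left; apply H; lia.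
    - unfold sumR. induction (seq 0 m); simpl; [lra| rewrite IHl; lra]. }
  specialize (H m ltac:(lia)). lra. Qed.

Lemma sumR_quad a c d m :
  sumR (fun j => a + c * INR j + d * (INR j * INR j)) (seq 0 m)
  = a * INR m + c * (INR m * (INR m - 1) / 2) + d * (INR m * (INR m - 1) * (2 * INR m - 1) / 6).
Proof. induction m as [|m IH].
  - unfold sumR; simpl. lra.
  - rewrite sumR_S, IH, S_INR. field. Qed.

Lemma sumR_IZR (f : nat -> Z) l :
  IZR (fold_right Z.add 0%Z (map f l)) = sumR (fun j => IZR (f j)) l.
Proof. unfold sumR; induction l as [|a l IH]; simpl; [reflexivity|]. rewrite plus_IZR, IH. reflexivity. Qed.

Lemma sumR_lin2 a c f g l : sumR (fun j => a * f j - c * g j) l = a * sumR f l - c * sumR g l.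
Proof. unfold sumR; induction l as [|x l IH]; simpl; [lra| rewrite IH; lra]. Qed.

Definition w (n j : nat) : R := INR n / (INR n - INR j).
Definition u (n j : nat) : R := 2 * b n + / 2 * (INR j * (INR j + 1) / (INR n - INR j)).
Definition K (n m : nat) : R :=
  sumR (fun j => w n j * ((INR m - INR j) * (INR m + INR j + 1 - 4 * b n))) (seq 0 m).

Lemma E_eq n m : E n m = sumR (w n) (seq 0 m).
Proof. reflexivity. Qed.

Lemma Ssum_eq n m : Ssum n m = sumR (fun j => INR j*(INR j+1)/(INR n - INR j)) (seq 0 m).
Proof. unfold Ssum. destruct m as [|m]; [reflexivity|].
  replace (S m - 1)%nat with m by lia. rewrite <- cons_seq.
  unfold sumR. simpl. rewrite Rmult_0_l. unfold Rdiv. rewrite Rmult_0_l. lra. Qed.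

Lemma N_eq n m : 2*INR m*b n + /2 * Ssum n m = sumR (u n) (seq 0 m).
Proof. unfold u. rewrite sumR_plus, Ssum_eq, <- sumR_scal.
  assert (H := sumR_quad (2 * b n) 0 0 m).
  rewrite (sumR_ext (fun _ => 2 * b n) (fun j => 2 * b n + 0 * INR j + 0 * (INR j * INR j))).
  - rewrite H. lra.
  - intros; lra. Qed.

Lemma E_S n m : E n (S m) = E n m + w n m.
Proof. rewrite !E_eq, sumR_S. reflexivity. Qed.

Lemma N_S n m : sumR (u n) (seq 0 (S m)) = sumR (u n) (seq 0 m) + u n m.
Proof. apply sumR_S. Qed.

Lemma w_pos n j : (j < n)%nat -> 0 < w n j.
Proof. intros H. unfold w. apply lt_INR in H. assert (0 <= INR j) by apply pos_INR.
  apply Rdiv_lt_0_compat; lra. Qed.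

Lemma E_pos n m : (1 <= m)%nat -> (m <= n)%nat -> 0 < E n m.
Proof. intros H1 H2. rewrite E_eq. apply sumR_pos; auto. intros; apply w_pos; lia. Qed.

Lemma key_id n m : (m < n)%nat ->
  u n m * E n m - w n m * sumR (u n) (seq 0 m) = w n m * K n m / (2 * INR n).
Proof. intros Hmn. rewrite E_eq. unfold K.
  rewrite <- sumR_lin2.
  replace (w n m * sumR (fun j => w n j * ((INR m - INR j) * (INR m + INR j + 1 - 4 * b n))) (seq 0 m) / (2 * INR n))
   with ((w n m / (2 * INR n)) * sumR (fun j => w n j * ((INR m - INR j) * (INR m + INR j + 1 - 4 * b n))) (seq 0 m)) by (unfold Rdiv; ring).
  rewrite <- sumR_scal.
  apply sumR_ext. intros j Hj. apply in_seq in Hj.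
  assert (Hj' : (INR j < INR n)) by (apply lt_INR; lia).
  assert (Hm' : (INR m < INR n)) by (apply lt_INR; lia).
  assert (0 <= INR j) by apply pos_INR.
  unfold u, w. field. repeat split; lra. Qed.

Lemma step n m : (1 <= m)%nat -> (m < n)%nat ->
  Ftilde n (S m) - Ftilde n m = w n m * K n m / (2 * INR n * E n m * E n (S m)).
Proof. intros H1 H2. unfold Ftilde. rewrite !N_eq, N_S, E_S.
  assert (HE := E_pos n m H1 ltac:(lia)). assert (Hw := w_pos n m H2).
  assert (Hn : 0 < INR n) by (apply lt_0_INR; lia).
  assert (HK := key_id n m H2).
  set (A := E n m) in *. set (Nm := sumR (u n) (seq 0 m)) in *.
  assert (Ku : K n m = (u n m * A - w n m * Nm) * (2 * INR n) / w n m).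
  { rewrite HK. field. lra. }
  rewrite Ku. field. lra. Qed.

Lemma step_lt n m : (1 <= m)%nat -> (m < n)%nat -> K n m < 0 -> Ftilde n (S m) < Ftilde n m.
Proof. intros H1 H2 HK. assert (Hs := step n m H1 H2).
  assert (HE := E_pos n m H1 ltac:(lia)). assert (HE' := E_pos n (S m) ltac:(lia) ltac:(lia)).
  assert (Hw := w_pos n m H2). assert (Hn : 0 < INR n) by (apply lt_0_INR; lia).
  assert (w n m * K n m / (2 * INR n * E n m * E n (S m)) < 0); [|lra].
  unfold Rdiv. apply Rmult_neg_pos. { rewrite Rmult_comm; apply Rmult_neg_pos; lra. }
  apply Rinv_0_lt_compat. repeat apply Rmult_lt_0_compat; lra. Qed.

Lemma step_ge n m : (1 <= m)%nat -> (m < n)%nat -> 0 <= K n m -> Ftilde n m <= Ftilde n (S m).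
Proof. intros H1 H2 HK. assert (Hs := step n m H1 H2).
  assert (HE := E_pos n m H1 ltac:(lia)). assert (HE' := E_pos n (S m) ltac:(lia) ltac:(lia)).
  assert (Hw := w_pos n m H2). assert (Hn : 0 < INR n) by (apply lt_0_INR; lia).
  assert (0 <= w n m * K n m / (2 * INR n * E n m * E n (S m))); [|lra].
  unfold Rdiv. apply Rmult_le_pos. { apply Rmult_le_pos; lra. }
  left. apply Rinv_0_lt_compat. repeat apply Rmult_lt_0_compat; lra. Qed.

Lemma sum_t n m : sumR (fun j => (INR m - INR j) * (INR m + INR j + 1 - 4 * b n)) (seq 0 m)
   = INR m * (INR m + 1) * (2 * INR m + 1 - 6 * b n) / 3.
Proof.
  rewrite (sumR_ext _ (fun j => INR m * (INR m + 1 - 4 * b n) + (4 * b n - 1) * INR j + (-1) * (INR j * INR j))).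
  - rewrite sumR_quad. field.
  - intros; ring. Qed.

Lemma claim1 n m : (1 <= m)%nat -> (m < n)%nat -> 6 * b n <= 2 * INR m + 1 -> 0 <= K n m.
Proof. intros H1 H2 Hb.
  assert (Hm : 1 <= INR m) by (apply (le_INR 1); lia).
  assert (Hmn : INR m + 1 <= INR n) by (rewrite <- S_INR; apply le_INR; lia).
  set (x := 4 * b n - INR m - 1).
  assert (Hx : x < INR n) by (unfold x; lra).
  set (lam := INR n / (INR n - x)).
  assert (Hlam : 0 < lam) by (unfold lam; apply Rdiv_lt_0_compat; lra).
  assert (HS := sum_t n m).
  assert (HSp : 0 <= INR m * (INR m + 1) * (2 * INR m + 1 - 6 * b n) / 3).
  { apply Rmult_le_pos; [|lra]. apply Rmult_le_pos; [apply Rmult_le_pos|]; lra. }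
  apply Rle_trans with (lam * sumR (fun j => (INR m - INR j) * (INR m + INR j + 1 - 4 * b n)) (seq 0 m)).
  { rewrite HS. apply Rmult_le_pos; lra. }
  rewrite <- sumR_scal. unfold K. apply sumR_le. intros j Hj. apply in_seq in Hj.
  assert (Hj' : INR j + 1 <= INR m) by (rewrite <- S_INR; apply le_INR; lia).
  assert (0 <= INR j) by apply pos_INR.
  assert (E1 : w n j * ((INR m - INR j) * (INR m + INR j + 1 - 4 * b n))
     - lam * ((INR m - INR j) * (INR m + INR j + 1 - 4 * b n))
     = INR n * ((INR j - x) * (INR j - x)) * (INR m - INR j) / ((INR n - INR j) * (INR n - x))).
  { unfold w, lam, x. field. split; lra. }
  assert (0 <= INR n * ((INR j - x) * (INR j - x)) * (INR m - INR j) / ((INR n - INR j) * (INR n - x))).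
  { apply Rmult_le_pos. apply Rmult_le_pos. apply Rmult_le_pos. lra. apply Rle_0_sqr. lra.
    left. apply Rinv_0_lt_compat. apply Rmult_lt_0_compat; lra. }
  lra. Qed.

Definition Phi (n m : nat) : R :=
  sumR (fun j => w n j * ((INR m - INR j) * (3 * INR j - INR m - 3))) (seq 0 m).

Lemma claim2 n m : (1 <= m)%nat -> (m < n)%nat -> (2 * INR m + 3) / 6 < b n -> Phi n m <= 0 -> K n m < 0.
Proof. intros H1 H2 Hb HP.
  assert (HK : K n m = /3 * Phi n m + ((4 * INR m + 6) / 3 - 4 * b n) * sumR (fun j => w n j * (INR m - INR j)) (seq 0 m)).
  { unfold Phi. rewrite <- !sumR_scal, <- sumR_plus. unfold K. apply sumR_ext. intros; field. }
  assert (Hpos : 0 < sumR (fun j => w n j * (INR m - INR j)) (seq 0 m)).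
  { apply sumR_pos; auto. intros j Hj. apply Rmult_lt_0_compat. apply w_pos; lia.
    apply lt_INR in Hj. lra. }
  rewrite HK. assert (((4 * INR m + 6) / 3 - 4 * b n) * sumR (fun j => w n j * (INR m - INR j)) (seq 0 m) < 0).
  { rewrite Rmult_comm. apply Rmult_pos_neg; lra. } lra. Qed.

Lemma ln_le' x y : 0 < x -> x <= y -> ln x <= ln y.
Proof. intros Hx [H|H]. left; apply ln_increasing; auto. subst; lra. Qed.

Lemma Bk (n m p q : nat) : (1 <= n)%nat -> (1 <= p)%nat ->
  ((n+1)^p <= 2^q)%nat -> (6*(n+1)*q <= p*(n*(2*m+9)))%nat ->
  b n <= (2 * INR m + 3) / 6.
Proof. intros Hn Hp H1 H2.
  apply le_INR in H1. rewrite !pow_INR in H1. replace (INR 2) with 2 in H1 by (simpl; lra).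
  rewrite plus_INR in H1. simpl INR in H1 at 2.
  assert (HN : 1 <= INR n) by (apply (le_INR 1); auto).
  assert (HP : 1 <= INR p) by (apply (le_INR 1); auto).
  assert (Hl : INR p * ln (INR n + 1) <= INR q * ln 2).
  { rewrite <- !ln_pow by lra. apply ln_le'. apply pow_lt; lra. auto. }
  apply le_INR in H2. rewrite !mult_INR, !plus_INR, mult_INR in H2. simpl INR in H2.
  assert (Hl2 : 0 < ln 2) by (rewrite <- ln_1; apply ln_increasing; lra).
  set (L := ln (INR n + 1) / ln 2).
  assert (HL : INR p * L <= INR q).
  { unfold L. apply (Rmult_le_reg_r (ln 2)); auto. unfold Rdiv. rewrite Rmult_assoc, Rmult_assoc, Rinv_l by lra. lra. }
  assert (HL0 : 0 <= L).
  { unfold L. apply Rmult_le_pos; [|left; apply Rinv_0_lt_compat; auto].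
    rewrite <- ln_1. apply ln_le'; lra. }
  unfold b, log2. fold L.
  assert (Hq : INR p * ((INR n + 1) * L) <= INR p * (INR n * (2 * INR m + 9) / 6)).
  { apply Rle_trans with ((INR n + 1) * INR q). nra. lra. }
  apply Rmult_le_reg_l in Hq; [|lra].
  assert ((1 + / INR n) * L = (INR n + 1) * L / INR n) by (field; lra).
  rewrite H. apply Rle_trans with (INR n * (2 * INR m + 9) / 6 / INR n - 1).
  { unfold Rdiv at 1 3. apply Rplus_le_compat_r. apply Rmult_le_compat_r; [left; apply Rinv_0_lt_compat; lra|]. lra. }
  right. field. lra. Qed.

Definition qz (m j : nat) : Z :=
  (Z.of_nat j * (Z.of_nat m - Z.of_nat j) * Z.max 0 (3 * Z.of_nat j - Z.of_nat m - 3))%Z.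
Definition Qz (m : nat) : Z := fold_right Z.add 0%Z (map (qz m) (seq 0 m)).
Definition cond1b (m n : nat) : bool :=
  Z.leb (Qz m) (2 * Z.of_nat m * (Z.of_nat m + 1) * (Z.of_nat n - Z.of_nat m + 1))%Z.
Definition cond2b (m n : nat) : bool :=
  Nat.ltb n 5 || (let k := Nat.log2_up (n+1) in
     Nat.leb (n+1) (2^k) && Nat.leb (6*(n+1)*k) (n*(2*m+9)))%nat.
Fixpoint loopb (m n fuel : nat) : bool :=
  match fuel with O => false
  | S f => if cond1b m n then true else cond2b m n && loopb m (S n) f end.
Fixpoint allm (M : nat) : bool :=
  match M with O => true | S M' => loopb M (S M) 300 && allm M' end.

Lemma IZR_a m j : IZR (3 * Z.of_nat j - Z.of_nat m - 3) = 3 * INR j - INR m - 3.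
Proof. rewrite !minus_IZR, mult_IZR, <- !INR_IZR_INZ. reflexivity. Qed.
Lemma IZR_b m j : IZR (Z.of_nat m - Z.of_nat j) = INR m - INR j.
Proof. rewrite !minus_IZR, <- !INR_IZR_INZ. reflexivity. Qed.

Lemma term_bound n m j : (j < m)%nat -> (m < n)%nat ->
  w n j * ((INR m - INR j) * (3 * INR j - INR m - 3))
  <= (INR m - INR j) * (3 * INR j - INR m - 3) + / (INR n - INR m + 1) * IZR (qz m j).
Proof. intros Hj Hm.
  assert (Hj' : INR j + 1 <= INR m) by (rewrite <- S_INR; apply le_INR; lia).
  assert (Hm' : INR m + 1 <= INR n) by (rewrite <- S_INR; apply le_INR; lia).
  assert (H0 : 0 <= INR j) by apply pos_INR.
  assert (Hw : w n j = 1 + INR j / (INR n - INR j)) by (unfold w; field; lra).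
  assert (HD : 0 < / (INR n - INR m + 1)) by (apply Rinv_0_lt_compat; lra).
  set (c := (INR m - INR j) * (3 * INR j - INR m - 3)).
  destruct (Z_le_gt_dec (3 * Z.of_nat j - Z.of_nat m - 3) 0) as [Hz|Hz].
  - assert (Hq : qz m j = 0%Z) by (unfold qz; rewrite Z.max_l by lia; ring).
    rewrite Hq. apply IZR_le in Hz. rewrite IZR_a in Hz.
    assert (Hc : c <= 0) by (unfold c; nra).
    rewrite Hw. assert (0 <= INR j / (INR n - INR j)) by (apply Rmult_le_pos; [lra| left; apply Rinv_0_lt_compat; lra]).
    simpl IZR. nra.
  - assert (Hq : IZR (qz m j) = INR j * c).
    { unfold qz. rewrite Z.max_r by lia. rewrite !mult_IZR, IZR_a, IZR_b, <- INR_IZR_INZ. unfold c. ring. }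
    apply Z.gt_lt, IZR_lt in Hz. rewrite IZR_a in Hz.
    assert (Hc : 0 <= c) by (unfold c; nra).
    rewrite Hq, Hw.
    assert (INR j / (INR n - INR j) <= INR j * / (INR n - INR m + 1)).
    { unfold Rdiv. apply Rmult_le_compat_l; auto. apply Rinv_le_contravar; lra. }
    nra. Qed.

Lemma Phi_bound n m : (m < n)%nat ->
  Phi n m <= -2 * INR m * (INR m + 1) + / (INR n - INR m + 1) * IZR (Qz m).
Proof. intros Hm. unfold Phi.
  apply Rle_trans with (sumR (fun j => (INR m - INR j) * (3 * INR j - INR m - 3) + / (INR n - INR m + 1) * IZR (qz m j)) (seq 0 m)).
  { apply sumR_le. intros j Hj. apply in_seq in Hj. apply term_bound; lia. }
  rewrite sumR_plus, sumR_scal. unfold Qz. rewrite sumR_IZR.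
  rewrite (sumR_ext _ (fun j => - (INR m * (INR m + 3)) + (4 * INR m + 3) * INR j + (-3) * (INR j * INR j))).
  - rewrite sumR_quad. right. field. apply lt_INR in Hm. lra.
  - intros; ring. Qed.

Lemma cond1_Phi n m : (m < n)%nat -> cond1b m n = true -> Phi n m <= 0.
Proof. intros Hm Hc. unfold cond1b in Hc. apply Z.leb_le in Hc. apply IZR_le in Hc.
  rewrite !mult_IZR, !plus_IZR, minus_IZR, <- !INR_IZR_INZ in Hc.
  assert (Hm' : INR m + 1 <= INR n) by (rewrite <- S_INR; apply le_INR; lia).
  assert (HB := Phi_bound n m Hm).
  assert (/ (INR n - INR m + 1) * IZR (Qz m) <= 2 * INR m * (INR m + 1)).
  { apply (Rmult_le_reg_l (INR n - INR m + 1)); [lra|].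
    rewrite <- Rmult_assoc, Rinv_r by lra. simpl IZR in Hc. lra. }
  lra. Qed.

Lemma cond1_mono m n n' : (n <= n')%nat -> cond1b m n = true -> cond1b m n' = true.
Proof. unfold cond1b. intros H. rewrite !Z.leb_le. intros H1.
  assert (Z.of_nat n <= Z.of_nat n')%Z by lia.
  assert (0 <= 2 * Z.of_nat m * (Z.of_nat m + 1))%Z by lia. nia. Qed.

Lemma loop_ok m fuel : forall n0, loopb m n0 fuel = true ->
  forall n, (n0 <= n)%nat -> cond1b m n = true \/ cond2b m n = true.
Proof. induction fuel as [|f IH]; intros n0 H n Hn; simpl in H; [discriminate|].
  destruct (cond1b m n0) eqn:E1.
  - left. eapply cond1_mono; eauto.
  - apply andb_true_iff in H. destruct H as [H2 H3].
    destruct (Nat.eq_dec n n0) as [->|Hne]; [right; auto|].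
    apply (IH (S n0)); auto. lia. Qed.

Lemma allm_spec M : allm M = true -> forall m, (1 <= m <= M)%nat -> loopb m (S m) 300 = true.
Proof. induction M as [|M IH]; intros H m Hm; [lia|]. simpl in H. apply andb_true_iff in H.
  destruct H as [H1 H2]. destruct (Nat.eq_dec m (S M)) as [->|]; auto. apply IH; auto; lia. Qed.

Lemma allm_ok : allm 47 = true. Proof. vm_compute. reflexivity. Qed.

Lemma cond2_b m n : (5 <= n)%nat -> cond2b m n = true -> b n <= (2 * INR m + 3) / 6.
Proof. intros Hn H. unfold cond2b in H. apply orb_true_iff in H. destruct H as [H|H].
  - apply Nat.ltb_lt in H. lia.
  - apply andb_true_iff in H. destruct H as [H1 H2]. apply Nat.leb_le in H1, H2.
    apply (Bk n m 1 (Nat.log2_up (n+1))); try lia. rewrite Nat.pow_1_r. auto. Qed.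

Lemma pow_big q : (12 <= q)%nat -> ((4*q+3)*(4*q+3)+(4*q+3) <= 2^q)%nat.
Proof. induction q as [|q IH]; intros H; [lia|].
  destruct (Nat.eq_dec q 11) as [->|Hq]; [simpl; lia|].
  specialize (IH ltac:(lia)). rewrite Nat.pow_succ_r'. nia. Qed.

Lemma sumZ_le (f : nat -> Z) l M : (forall x, In x l -> (f x <= M)%Z) ->
  (fold_right Z.add 0 (map f l) <= Z.of_nat (length l) * M)%Z.
Proof. induction l as [|a l IH]; intros H; cbn [map fold_right length]; [lia|].
  specialize (IH (fun x Hx => H x (or_intror Hx))). specialize (H a (or_introl eq_refl)). rewrite Nat2Z.inj_succ, Z.mul_succ_l. lia. Qed.

Lemma Qz_le m : (Qz m <= 2 * Z.of_nat m ^ 4)%Z.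
Proof. unfold Qz. eapply Z.le_trans. apply (sumZ_le _ _ (2 * Z.of_nat m ^ 3)).
  - intros j Hj. apply in_seq in Hj. unfold qz.
    assert (0 <= Z.of_nat j < Z.of_nat m)%Z by lia.
    set (x := Z.of_nat j) in *. set (y := Z.of_nat m) in *.
    assert (Hjm : (0 <= x * (y - x) <= y * y)%Z) by nia.
    destruct (Z.max_spec 0 (3 * x - y - 3)) as [[A B]|[A B]]; rewrite B.
    + assert (x * (y - x) * (3 * x - y - 3) <= (y * y) * (3 * x - y - 3))%Z by (apply Z.mul_le_mono_nonneg_r; lia).
      assert ((y * y) * (3 * x - y - 3) <= (y*y) * (2 * y))%Z by (apply Z.mul_le_mono_nonneg_l; lia).
      lia.
    + nia.
  - rewrite seq_length. nia. Qed.

Lemma KL n m : (5 <= n)%nat -> (1 <= m)%nat -> (m < n)%nat ->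
  Phi n m <= 0 \/ b n <= (2 * INR m + 3) / 6.
Proof. intros H5 H1 H2.
  destruct (cond1b m n) eqn:E1; [left; apply cond1_Phi; auto|right].
  destruct (le_lt_dec m 47) as [Hs|Hl].
  - assert (HL := allm_spec 47 allm_ok m ltac:(lia)).
    destruct (loop_ok m 300 (S m) HL n ltac:(lia)) as [C|C]; [congruence|].
    apply cond2_b; auto.
  - unfold cond1b in E1. apply Z.leb_gt in E1. assert (HQ := Qz_le m).
    assert (Hnm : (n + 1 < m * m + m)%nat).
    { assert (Z.of_nat n + 1 < Z.of_nat m * Z.of_nat m + Z.of_nat m)%Z; [|lia].
      assert (0 < Z.of_nat m)%Z by lia.
      assert ((Z.of_nat m + 1) * (Z.of_nat n - Z.of_nat m + 1) < Z.of_nat m ^ 3)%Z by nia.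
      nia. }
    set (q := (m / 4)%nat).
    assert (Hq : (4 * q <= m < 4 * q + 4)%nat).
    { unfold q. pose proof (Nat.div_mod m 4 ltac:(lia)). pose proof (Nat.mod_upper_bound m 4 ltac:(lia)). lia. }
    assert (Hp := pow_big q ltac:(lia)).
    apply (Bk n m 1 q); try lia. rewrite Nat.pow_1_r. nia. nia. Qed.

Lemma b_gt1 n : (5 <= n)%nat -> 1 < b n.
Proof. intros H. unfold b, log2.
  assert (Hn : 5 <= INR n) by (replace 5 with (INR 5) by (simpl; lra); apply le_INR; auto).
  assert (Hl2 : 0 < ln 2) by (rewrite <- ln_1; apply ln_increasing; lra).
  assert (H4 : ln 4 < ln (INR n + 1)) by (apply ln_increasing; lra).
  replace 4 with (2 ^ 2) in H4 by ring. rewrite ln_pow in H4 by lra. simpl INR in H4.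
  assert (HL : 2 < ln (INR n + 1) / ln 2).
  { apply (Rmult_lt_reg_r (ln 2)); auto. unfold Rdiv. rewrite Rmult_assoc, Rinv_l by lra. lra. }
  assert (0 < / INR n) by (apply Rinv_0_lt_compat; lra).
  nra. Qed.

Lemma pow_lin r : (r + 1 <= 2 ^ r)%nat.
Proof. induction r; simpl; lia. Qed.

Lemma Nbig n : (5 <= n)%nat -> b n <= (2 * INR n + 3) / 6.
Proof. intros H.
  destruct (le_lt_dec 12 n) as [Hb|Hs].
  - set (r := (n / 4)%nat).
    assert (Hr : (4 * r <= n < 4 * r + 4)%nat).
    { unfold r. pose proof (Nat.div_mod n 4 ltac:(lia)). pose proof (Nat.mod_upper_bound n 4 ltac:(lia)). lia. }
    assert (Hp := pow_lin r).
    apply (Bk n n 1 (r + 2)); try lia.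
    + rewrite Nat.pow_1_r, Nat.pow_add_r. simpl (2 ^ 2)%nat. lia.
    + nia.
  - assert (Hc : n = 5%nat \/ n = 6%nat \/ n = 7%nat \/ n = 8%nat \/ n = 9%nat \/ n = 10%nat \/ n = 11%nat) by lia.
    destruct Hc as [->|[->|[->|[->|[->|[->| ->]]]]]].
    + apply (Bk 5 5 5 13); vm_compute; try lia; discriminate.
    + apply (Bk 6 6 1 3); vm_compute; try lia; discriminate.
    + apply (Bk 7 7 1 3); vm_compute; try lia; discriminate.
    + apply (Bk 8 8 2 7); vm_compute; try lia; discriminate.
    + apply (Bk 9 9 1 4); vm_compute; try lia; discriminate.
    + apply (Bk 10 10 1 4); vm_compute; try lia; discriminate.
    + apply (Bk 11 11 1 4); vm_compute; try lia; discriminate.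
Qed.

Lemma exists_min (f : nat -> R) n : (1 <= n)%nat -> exists m, (1 <= m <= n)%nat /\
  (forall k, (1 <= k <= n)%nat -> f m <= f k) /\ (forall k, (1 <= k < m)%nat -> f m < f k).
Proof. induction n as [|n IH]; intros H; [lia|].
  destruct (Nat.eq_dec n 0) as [->|Hn].
  - exists 1%nat. split; [lia|]. split; intros k Hk; [replace k with 1%nat by lia; lra | lia].
  - destruct (IH ltac:(lia)) as [m [Hm [Hmin Hst]]].
    destruct (Rlt_dec (f (S n)) (f m)) as [Hl|Hl].
    + exists (S n). split; [lia|]. split.
      * intros k Hk. destruct (Nat.eq_dec k (S n)) as [->|]; [lra|]. specialize (Hmin k ltac:(lia)). lra.
      * intros k Hk. specialize (Hmin k ltac:(lia)). lra.
    + exists m. split; [lia|]. split; auto.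
      intros k Hk. destruct (Nat.eq_dec k (S n)) as [->|]; [lra|]. apply Hmin; lia.
Qed.

Theorem mainTheorem3 : forall n : nat, (5 <= n)%nat ->
  (exists m, is_mopt n m) /\
  (forall m : nat, is_mopt n m ->
     3 * b n - 3 / 2 <= INR m /\ INR m < 3 * b n + 1 / 2).
Proof. intros n H5. split.
  - destruct (exists_min (Ftilde n) n ltac:(lia)) as [m Hm]. exists m. exact Hm.
  - intros m [Hr [Hmin Hst]]. assert (Hb1 := b_gt1 n H5). split.
    + destruct (Rle_lt_dec (3 * b n - 3 / 2) (INR m)) as [|Hlt]; auto. exfalso.
      destruct (Nat.eq_dec m n) as [->|Hne].
      * assert (HN := Nbig n H5). lra.
      * assert (Hmn : (m < n)%nat) by lia.
        destruct (KL n m H5 ltac:(lia) Hmn) as [HP|HB]; [|lra].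
        assert (HK := claim2 n m ltac:(lia) Hmn ltac:(lra) HP).
        assert (HF := step_lt n m ltac:(lia) Hmn HK).
        specialize (Hmin (S m) ltac:(lia)). lra.
    + destruct (Rlt_le_dec (INR m) (3 * b n + 1 / 2)) as [|Hge]; auto. exfalso.
      destruct m as [|[|m']]; [simpl in Hge; lra|simpl in Hge; lra|].
      assert (Hm' : INR (S (S m')) = INR (S m') + 1) by (rewrite S_INR; ring).
      assert (HK := claim1 n (S m') ltac:(lia) ltac:(lia) ltac:(lra)).
      assert (HF := step_ge n (S m') ltac:(lia) ltac:(lia) HK).
      specialize (Hst (S m') ltac:(lia)). lra.
Qed.
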